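(* Let $(M,\Sigma)$ be a measurable space, $r\ge1$, and $\mu_1,\dots,\mu_r$ non-atomic countably additive finite measures on $\Sigma$. Let $(H_k)_{k\ge1}$ be measurable sets and $(h_k)_{k\ge1}$ indices in $\{1,\dots,r\}$ such that for every $k$: $H_k\subseteq M\setminus\bigcup_{i=1}^{k-1}H_i$, $H_k$ has a gentleman's solution (a partition $H_k=F_1\sqcup\dots\sqcup F_r$ with $\mu_i(F_i)\le\mu_i(F_j)$ for all $i,j$), and $\mu_{h_k}(H_k)\ge 2^{-(r-1)}\mu_{h_k}\bigl(M\setminus\bigcup_{i=1}^{k-1}H_i\bigr)$. Let $\ell\in\{1,\dots,r\}$ be an index with $h_k=\ell$ for infinitely many $k$, and let $k_1<k_2<\dots$ be all indices $k$ with $h_k=\ell$. Then for every $n\ge1$, $$\mu_\ell\Bigl(M\setminus\bigsqcup_{i=1}^{k_n}H_i\Bigr)\le\Bigl(\frac{2^{r-1}-1}{2^{r-1}}\Bigr)^{n}\mu_\ell(M).$$ *)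

(* Defs.v *)
From HB Require Import structures.
From mathcomp Require Import all_boot all_order all_algebra.
From mathcomp Require Import all_classical all_reals all_analysis.
Set Implicit Arguments. Unset Strict Implicit. Unset Printing Implicit Defensive.
Import Order.TTheory GRing.Theory Num.Theory.
Local Open Scope classical_set_scope.
Local Open Scope ring_scope.
Local Open Scope ereal_scope.

Definition nonatomic d (T : measurableType d) (R : realType)
  (mu : set T -> \bar R) : Prop :=
  forall A, measurable A -> 0 < mu A ->
    exists2 B, measurable B /\ B `<=` A & 0 < mu B /\ mu B < mu A.

Definition gentleman_solution d (T : measurableType d) (R : realType) (r : nat)
  (mu : 'I_r -> set T -> \bar R) (H : set T) : Prop :=
  exists F : 'I_r -> set T,
    [/\ forall i, measurable (F i),
        forall i j, i != j -> F i `&` F j = set0,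
        \big[setU/set0]_(i < r) F i = H &
        forall i j, mu i (F i) <= mu i (F j)].

(* Main.v *)
Require Import Defs.
From mathcomp Require Import ring.
From HB Require Import structures.
From mathcomp Require Import all_boot all_order all_algebra.
From mathcomp Require Import all_classical all_reals all_analysis.
Import Order.TTheory GRing.Theory Num.Theory.
Local Open Scope classical_set_scope.
Local Open Scope ring_scope.
Local Open Scope ereal_scope.

(* Indices are 0-based: H k for k : nat stands for H_{k+1}, and kk n for
   k_{n+1}; hence the exponent n.+1 in the conclusion. *)
Theorem lemma11 (d : measure_display) (T : measurableType d) (R : realType)
  (r : nat) (hr : (1 <= r)%N)
  (mu : 'I_r -> {measure set T -> \bar R})
  (mu_fin : forall i, mu i setT < +oo)
  (mu_na : forall i, nonatomic (mu i))
  (H : nat -> set T) (h : nat -> 'I_r)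
  (H_meas : forall k, measurable (H k))
  (H_sub : forall k, H k `<=` ~` \big[setU/set0]_(i < k) H i)
  (H_gent : forall k, gentleman_solution (fun i => (mu i : set T -> \bar R)) (H k))
  (H_big : forall k,
     mu (h k) (H k) >=
       ((2%:R ^+ r.-1)^-1 : R)%:E * mu (h k) (~` \big[setU/set0]_(i < k) H i))
  (l : 'I_r) (kk : nat -> nat)
  (kk_incr : forall n m, (n < m)%N -> (kk n < kk m)%N)
  (kk_all : forall k, h k = l <-> exists n, kk n = k) :
  forall n : nat,
    mu l (~` \big[setU/set0]_(i < (kk n).+1) H i) <=
      ((((2%:R ^+ r.-1) - 1) / 2%:R ^+ r.-1 : R) ^+ n.+1)%:E * mu l setT.
Proof.
set U := fun k => \big[setU/set0]_(i < k) H i.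
have mU k : measurable (U k) by apply: bigsetU_measurable => i _.
have mC k : measurable (~` U k) by apply: measurableC.
have fin A : measurable A -> mu l A \is a fin_num.
  move=> mA; rewrite ge0_fin_numE ?measure_ge0 //.
  apply: le_lt_trans (mu_fin l).
  by apply: le_measure; rewrite ?inE //; apply: measurableT.
set p := (2%:R ^+ r.-1 : R)%R.
have p1 : (1 <= p)%R by rewrite /p exprn_ege1 // ler1n.
have p0 : (0 < p)%R by apply: lt_le_trans p1.
have q0 : (0 <= (p - 1) / p)%R by rewrite divr_ge0 ?subr_ge0 // ltW.
have key k : h k = l -> mu l (~` U k.+1) <= ((p - 1) / p)%:E * mu l (~` U k).
  move=> hk.
  have lt : mu l (~` U k) < +oo.
    by rewrite -ge0_fin_numE ?measure_ge0 //; apply: fin.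
  rewrite {1}/U big_ord_recr /= setCU -setDE -/(U k) measureD //.
  rewrite (setIidr (H_sub k)).
  have := H_big k; rewrite hk -/p -/(U k).
  have fa := fin _ (mC k); have fb := fin _ (H_meas k).
  set a := mu l (~` U k) in fa *; set b := mu l (H k) in fb *.
  move=> hy; change (a - b <= ((p - 1) / p)%:E * a).
  move: hy; rewrite -(fineK fa) -(fineK fb).
  rewrite -EFinB -EFinM -EFinM !lee_fin.
  set x := fine a; set y := fine b => hy.
  have -> : ((p - 1) / p * x = x - p^-1 * x)%R.
    by field; rewrite gt_eqF.
  by apply: lerB.
have mono m n : (m <= n)%N -> ~` U n `<=` ~` U m.
  move=> mn; apply: subsetC; rewrite -(subnKC mn).
  elim: (n - m)%N => [|j IH]; first by rewrite addn0.
  by rewrite addnS /U big_ord_recr /=; apply: subset_trans IH _; apply: subsetUl.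
have hkk n : h (kk n) = l by apply/kk_all; exists n.
elim=> [|n IH].
  apply: le_trans (key _ (hkk 0%N)) _; rewrite expr1.
  apply: lee_wpmul2l; first by rewrite lee_fin.
  by apply: le_measure; rewrite ?inE //; apply: measurableT.
apply: le_trans (key _ (hkk n.+1)) _; rewrite exprS (EFinM ((p - 1) / p)) -muleA.
apply: lee_wpmul2l; first by rewrite lee_fin.
apply: le_trans IH; apply: le_measure; rewrite ?inE; [exact: (mC (kk n.+1))|exact: (mC (kk n).+1)|].
by apply: (mono (kk n).+1 (kk n.+1)); apply: kk_incr.
Qed.
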